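(* Let $\phi$ be a good potential on $\mathcal D$ with $\phi>0$, total potential $\Phi$. Let $\boldsymbol x\in\mathcal D^N$, $t>0$, $\boldsymbol p\in\Delta^{N-1}$ with $p_i\propto\partial_x\phi(x_i,t)$ (arbitrary if all these vanish), $\boldsymbol\ell\in\mathbb{R}^N$, $\Delta x_i=\langle\boldsymbol p,\boldsymbol\ell\rangle-\ell_i$, $\Delta t\ge0$, $(\boldsymbol x',t')=(\boldsymbol x+\Delta\boldsymbol x,t+\Delta t)$ and $\boldsymbol\Delta=(\Delta\boldsymbol x,\Delta t)\in\mathbb{R}^{N+1}$. Then there is a point $(\bar{\boldsymbol x},\bar t)$ on the line segment between $(\boldsymbol x,t)$ and $(\boldsymbol x',t')$ such that $$\log\Phi(\boldsymbol x',t')-\log\Phi(\boldsymbol x,t)=-\frac{\sum_{i=1}^N\partial_{xx}\phi(x_i,t)\,\Delta t}{2\,\Phi(\boldsymbol x,t)}+\frac12\nabla^2\log\Phi(\bar{\boldsymbol x},\bar t)[\boldsymbol\Delta,\boldsymbol\Delta].$$ In particular, if $\log\Phi(\boldsymbol x',t')=\log\Phi(\boldsymbol x,t)$, then $$\Delta t=\frac{\Phi(\boldsymbol x,t)\,\nabla^2\log\Phi(\bar{\boldsymbol x},\bar t)[\boldsymbol\Delta,\boldsymbol\Delta]}{\sum_{i=1}^N\partial_{xx}\phi(x_i,t)}.$$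
   Context: Good potential: let $\mathcal D=\mathbb{R}$ or $\mathcal D=[y_0,\infty)$, with Euclidean projection $\Pi_{\mathcal D}$. A function $\phi:\mathbb{R}\times[0,\infty)\to\mathbb{R}$ is a good potential on $\mathcal D$ if (1) it is jointly strictly convex, (2) three times differentiable, (3) $\partial_y\phi\ge0$, (4) $\partial_t\phi\le0$, (5) $\lim_{t\to\infty}\phi(y,t)=\inf_{y,t}\phi(y,t)\ge0$, (6) $\phi(\Pi_{\mathcal D}(y),t)\le\phi(y,t)$ for all $y$, and (7) $\partial_t\phi=-\tfrac12\partial_{yy}\phi$. Total potential $\Phi(\boldsymbol x,t)=\sum_{i=1}^N\phi(x_i,t)$. For a twice differentiable $f$, $\nabla^2 f(\boldsymbol z)[\boldsymbol a,\boldsymbol b]=\boldsymbol a^{\mathsf T}\nabla^2 f(\boldsymbol z)\boldsymbol b$. *)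

(* Defs.v *)
From Stdlib Require Import Reals.
From Coquelicot Require Import Coquelicot.
Open Scope R_scope.

Fixpoint sumR (N : nat) (f : nat -> R) : R :=
  match N with O => 0 | S n => sumR n f + f n end.

(* The domain D : None = R,  Some y0 = [y0, +oo) *)
Definition inD (D : option R) (y : R) : Prop :=
  match D with None => True | Some y0 => y0 <= y end.
Definition projD (D : option R) (y : R) : R :=
  match D with None => y | Some y0 => Rmax y0 y end.

Definition dy (f : R -> R -> R) : R -> R -> R := fun y t => Derive (fun u => f u t) y.
Definition dt (f : R -> R -> R) : R -> R -> R := fun y t => Derive (fun s => f y s) t.

Definition thrice_diff (f : R -> R -> R) : Prop :=
  forall y t, 0 < t ->
    differentiable_pt f y t /\
    differentiable_pt (dy f) y t /\ differentiable_pt (dt f) y t /\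
    differentiable_pt (dy (dy f)) y t /\ differentiable_pt (dy (dt f)) y t /\
    differentiable_pt (dt (dy f)) y t /\ differentiable_pt (dt (dt f)) y t.

Definition good_potential (D : option R) (phi : R -> R -> R) : Prop :=
  (forall y1 t1 y2 t2 lam, 0 <= t1 -> 0 <= t2 -> (y1 <> y2 \/ t1 <> t2) ->
      0 < lam < 1 ->
      phi (lam * y1 + (1 - lam) * y2) (lam * t1 + (1 - lam) * t2)
        < lam * phi y1 t1 + (1 - lam) * phi y2 t2) /\
  thrice_diff phi /\
  (forall y t, 0 < t -> 0 <= dy phi y t) /\
  (forall y t, 0 < t -> dt phi y t <= 0) /\
  (exists m : R, 0 <= m /\
     (forall y t, 0 <= t -> m <= phi y t) /\
     (forall eps, 0 < eps -> exists y t, 0 <= t /\ phi y t < m + eps) /\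
     (forall y, is_lim (fun t => phi y t) p_infty m)) /\
  (forall y t, 0 <= t -> phi (projD D y) t <= phi y t) /\
  (forall y t, 0 < t -> dt phi y t = - / 2 * dy (dy phi) y t).

Definition Phi (N : nat) (phi : R -> R -> R) (x : nat -> R) (t : R) : R :=
  sumR N (fun i => phi (x i) t).

Definition upd (x : nat -> R) (i : nat) (s : R) : nat -> R :=
  fun j => if Nat.eqb j i then s else x j.
Definition pxi (F : (nat -> R) -> R -> R) (i : nat) : (nat -> R) -> R -> R :=
  fun x t => Derive (fun s => F (upd x i s) t) (x i).
Definition pt (F : (nat -> R) -> R -> R) : (nat -> R) -> R -> R :=
  fun x t => Derive (fun s => F x s) t.

(* nabla^2 F (x,t) [(a,at),(a,at)] = a^T H a with H the (N+1)x(N+1) Hessian *)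
Definition hess_form (N : nat) (F : (nat -> R) -> R -> R) (x : nat -> R) (t : R)
    (a : nat -> R) (at_ : R) : R :=
  sumR N (fun i => sumR N (fun j => a i * pxi (pxi F j) i x t * a j))
  + sumR N (fun i => a i * pxi (pt F) i x t * at_)
  + sumR N (fun j => at_ * pt (pxi F j) x t * a j)
  + at_ * pt (pt F) x t * at_.

Definition logPhi (N : nat) (phi : R -> R -> R) : (nat -> R) -> R -> R :=
  fun x t => ln (Phi N phi x t).

(* Main.v *)
Require Import Defs.
From Stdlib Require Import Reals.
From Coquelicot Require Import Coquelicot.
From Stdlib Require Import Lra Lia Psatz FunctionalExtensionality Classical.
Open Scope R_scope.

Lemma diff_lim f y s : differentiable_pt f y s ->
  differentiable_pt_lim f y s (dy f y s) (dt f y s).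
Proof.
  intros [lx [ly H]]. destruct (differentiable_pt_lim_unique _ _ _ _ _ H) as [H1 H2].
  unfold dy, dt. rewrite H1, H2. exact H.
Qed.

Lemma line_deriv f y a s0 b u : differentiable_pt f (y + u * a) (s0 + u * b) ->
  is_derive (fun u => f (y + u * a) (s0 + u * b)) u
    (a * dy f (y + u * a) (s0 + u * b) + b * dt f (y + u * a) (s0 + u * b)).
Proof.
  intros H. apply is_derive_Reals.
  pose proof (derivable_pt_lim_comp_2d f (fun u => y + u * a) (fun u => s0 + u * b) u
     _ _ a b (diff_lim _ _ _ H)) as K.
  replace (a * dy f (y + u * a) (s0 + u * b) + b * dt f (y + u * a) (s0 + u * b))
    with (dy f (y + u * a) (s0 + u * b) * a + dt f (y + u * a) (s0 + u * b) * b) by ring.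
  apply K; apply is_derive_Reals; auto_derive; auto; ring.
Qed.

Lemma dy_deriv f y s : differentiable_pt f y s -> is_derive (fun u => f u s) y (dy f y s).
Proof.
  intros H. apply is_derive_Reals.
  pose proof (derivable_pt_lim_comp_2d f (fun u => u) (fun _ => s) y
     _ _ 1 0 (diff_lim _ _ _ H)) as K.
  replace (dy f y s) with (dy f y s * 1 + dt f y s * 0) by ring.
  apply K; apply is_derive_Reals; auto_derive; auto; ring.
Qed.

Lemma dt_deriv f y s : differentiable_pt f y s -> is_derive (fun u => f y u) s (dt f y s).
Proof.
  intros H. apply is_derive_Reals.
  pose proof (derivable_pt_lim_comp_2d f (fun _ => y) (fun u => u) s
     _ _ 0 1 (diff_lim _ _ _ H)) as K.
  replace (dt f y s) with (dy f y s * 0 + dt f y s * 1) by ring.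
  apply K; apply is_derive_Reals; auto_derive; auto; ring.
Qed.

Lemma sumR_ext N f g : (forall k, (k < N)%nat -> f k = g k) -> sumR N f = sumR N g.
Proof.
  induction N; simpl; intros H; auto.
  rewrite IHN by (intros; apply H; lia). rewrite H by lia. auto.
Qed.

Lemma sumR_add N f g : sumR N (fun k => f k + g k) = sumR N f + sumR N g.
Proof. induction N; simpl; [ring|rewrite IHN; ring]. Qed.

Lemma sumR_scal N c f : sumR N (fun k => c * f k) = c * sumR N f.
Proof. induction N; simpl; [ring|rewrite IHN; ring]. Qed.

Lemma sumR_delta N i c : (i < N)%nat -> sumR N (fun k => if Nat.eqb k i then c else 0) = c.
Proof.
  induction N; intros Hi; [lia|]. simpl.
  destruct (Nat.eqb_spec N i).
  - subst. rewrite (sumR_ext _ _ (fun _ => 0 * 0)).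
    + rewrite sumR_scal. ring.
    + intros k Hk. destruct (Nat.eqb_spec k i); [lia|ring].
  - rewrite IHN by lia. ring.
Qed.

Lemma sumR_deriv N (F : nat -> R -> R) F' s :
  (forall k, (k < N)%nat -> is_derive (F k) s (F' k)) ->
  is_derive (fun s => sumR N (fun k => F k s)) s (sumR N F').
Proof.
  induction N; simpl; intros H.
  - apply (is_derive_const 0 s).
  - apply (is_derive_plus (fun s => sumR N (fun k => F k s)) (F N)).
    + apply IHN. intros; apply H; lia.
    + apply H; lia.
Qed.

Lemma sumR_nonneg N f : (forall k, (k < N)%nat -> 0 <= f k) -> 0 <= sumR N f.
Proof.
  induction N; simpl; intros H; [lra|].
  pose proof (H N ltac:(lia)). pose proof (IHN ltac:(intros; apply H; lia)). lra.
Qed.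

Lemma sumR_pos N f : (1 <= N)%nat -> (forall k, (k < N)%nat -> 0 < f k) -> 0 < sumR N f.
Proof.
  destruct N; intros HN H; [lia|]. simpl.
  pose proof (H N ltac:(lia)).
  pose proof (sumR_nonneg N f ltac:(intros; apply Rlt_le, H; lia)). lra.
Qed.

Lemma upd_same z i : upd z i (z i) = z.
Proof.
  apply functional_extensionality; intros k; unfold upd.
  destruct (Nat.eqb_spec k i); subst; auto.
Qed.

Lemma upd_deriv N f z i s0 s : (i < N)%nat -> differentiable_pt f s0 s ->
  is_derive (fun u => sumR N (fun k => f (upd z i u k) s)) s0 (dy f s0 s).
Proof.
  intros Hi Hd. rewrite <- (sumR_delta N i (dy f s0 s) Hi).
  apply (sumR_deriv N (fun k u => f (upd z i u k) s)).
  intros k Hk. unfold upd. destruct (Nat.eqb k i).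
  - apply dy_deriv; auto.
  - apply (is_derive_const (f (z k) s) s0).
Qed.

Lemma t_deriv N f z s : (forall k, (k < N)%nat -> differentiable_pt f (z k) s) ->
  is_derive (fun u => sumR N (fun k => f (z k) u)) s (sumR N (fun k => dt f (z k) s)).
Proof.
  intros Hd. apply (sumR_deriv N (fun k u => f (z k) u)).
  intros k Hk. apply dt_deriv; auto.
Qed.

Lemma ln_comp g x dg : 0 < g x -> is_derive g x dg ->
  is_derive (fun s => ln (g s)) x (dg / g x).
Proof.
  intros Hp Hd.
  pose proof (is_derive_comp ln g x _ _ (is_derive_ln _ Hp) Hd) as K.
  replace (dg / g x) with (scal dg (/ g x)) by (unfold scal; simpl; unfold mult; simpl; field; lra).
  exact K.
Qed.

Definition Hyp (N : nat) (phi : R -> R -> R) : Prop :=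
  (1 <= N)%nat /\ (forall y s, 0 <= s -> 0 < phi y s) /\
  (forall y s, 0 < s -> differentiable_pt phi y s /\ differentiable_pt (dy phi) y s
      /\ differentiable_pt (dt phi) y s).

Lemma Phi_pos N phi z s : Hyp N phi -> 0 < s -> 0 < Phi N phi z s.
Proof.
  intros [HN [Hp _]] Hs. unfold Phi. apply sumR_pos; auto.
  intros; apply Hp; lra.
Qed.

Lemma PX1 N phi z s i : Hyp N phi -> (i < N)%nat -> 0 < s ->
  pxi (logPhi N phi) i z s = dy phi (z i) s / Phi N phi z s.
Proof.
  intros H Hi Hs. pose proof H as [HN [Hp Hd]].
  unfold pxi, logPhi. apply is_derive_unique.
  pose proof (ln_comp (fun u => Phi N phi (upd z i u) s) (z i) (dy phi (z i) s)) as K.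
  cbv beta in K. rewrite upd_same in K. apply K.
  - apply Phi_pos; auto.
  - unfold Phi. apply upd_deriv; auto. apply Hd; auto.
Qed.

Definition ST N (f : R -> R -> R) z s := sumR N (fun k => dt f (z k) s).

Lemma PT1 N phi z s : Hyp N phi -> 0 < s ->
  pt (logPhi N phi) z s = ST N phi z s / Phi N phi z s.
Proof.
  intros H Hs. pose proof H as [HN [Hp Hd]].
  unfold pt, logPhi. apply is_derive_unique.
  apply (ln_comp (fun u => Phi N phi z u)).
  - apply Phi_pos; auto.
  - unfold Phi, ST. apply t_deriv. intros; apply Hd; auto.
Qed.

Lemma locpos s : 0 < s -> locally s (fun u => 0 < u).
Proof. intros Hs. apply (open_gt 0). exact Hs. Qed.

Lemma PXX N phi z s i j : Hyp N phi -> (i < N)%nat -> (j < N)%nat -> 0 < s ->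
  pxi (pxi (logPhi N phi) j) i z s =
  ((if Nat.eqb j i then dy (dy phi) (z i) s else 0) * Phi N phi z s
    - dy phi (z j) s * dy phi (z i) s) / (Phi N phi z s)^2.
Proof.
  intros H Hi Hj Hs. pose proof H as [HN [Hp Hd]].
  transitivity (Derive (fun u => pxi (logPhi N phi) j (upd z i u) s) (z i)); [reflexivity|].
  rewrite (Derive_ext _ (fun u => dy phi (upd z i u j) s / Phi N phi (upd z i u) s) (z i))
    by (intros; apply PX1; auto).
  apply is_derive_unique.
  assert (Hn : is_derive (fun u => dy phi (upd z i u j) s) (z i)
     (if Nat.eqb j i then dy (dy phi) (z i) s else 0)).
  { unfold upd. destruct (Nat.eqb j i).
    - apply dy_deriv. apply Hd; auto.
    - apply (is_derive_const (dy phi (z j) s) (z i)). }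
  assert (Hdn : is_derive (fun u => Phi N phi (upd z i u) s) (z i) (dy phi (z i) s)).
  { unfold Phi. apply upd_deriv; auto. apply Hd; auto. }
  pose proof (is_derive_div _ _ _ _ _ Hn Hdn) as K. cbv beta in K.
  rewrite upd_same in K. apply K.
  pose proof (Phi_pos N phi z s H Hs). lra.
Qed.

Lemma PXT N phi z s i : Hyp N phi -> (i < N)%nat -> 0 < s ->
  pxi (pt (logPhi N phi)) i z s =
  (dy (dt phi) (z i) s * Phi N phi z s - ST N phi z s * dy phi (z i) s) / (Phi N phi z s)^2.
Proof.
  intros H Hi Hs. pose proof H as [HN [Hp Hd]].
  transitivity (Derive (fun u => pt (logPhi N phi) (upd z i u) s) (z i)); [reflexivity|].
  rewrite (Derive_ext _ (fun u => ST N phi (upd z i u) s / Phi N phi (upd z i u) s) (z i))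
    by (intros; apply PT1; auto).
  apply is_derive_unique.
  assert (Hn : is_derive (fun u => ST N phi (upd z i u) s) (z i) (dy (dt phi) (z i) s)).
  { unfold ST. apply (upd_deriv N (dt phi)); auto. apply Hd; auto. }
  assert (Hdn : is_derive (fun u => Phi N phi (upd z i u) s) (z i) (dy phi (z i) s)).
  { unfold Phi. apply upd_deriv; auto. apply Hd; auto. }
  pose proof (is_derive_div _ _ _ _ _ Hn Hdn) as K. cbv beta in K.
  rewrite upd_same in K. apply K.
  pose proof (Phi_pos N phi z s H Hs). lra.
Qed.

Lemma PTX N phi z s j : Hyp N phi -> (j < N)%nat -> 0 < s ->
  pt (pxi (logPhi N phi) j) z s =
  (dt (dy phi) (z j) s * Phi N phi z s - dy phi (z j) s * ST N phi z s) / (Phi N phi z s)^2.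
Proof.
  intros H Hj Hs. pose proof H as [HN [Hp Hd]].
  unfold pt at 1.
  rewrite (Derive_ext_loc _ (fun u => dy phi (z j) u / Phi N phi z u) s).
  2:{ eapply filter_imp; [|exact (locpos s Hs)]. intros u Hu. apply PX1; auto. }
  apply is_derive_unique.
  apply is_derive_div.
  - apply dt_deriv. apply Hd; auto.
  - unfold Phi, ST. apply t_deriv. intros; apply Hd; auto.
  - pose proof (Phi_pos N phi z s H Hs). lra.
Qed.

Lemma PTT N phi z s : Hyp N phi -> 0 < s ->
  pt (pt (logPhi N phi)) z s =
  (sumR N (fun k => dt (dt phi) (z k) s) * Phi N phi z s - ST N phi z s * ST N phi z s)
    / (Phi N phi z s)^2.
Proof.
  intros H Hs. pose proof H as [HN [Hp Hd]].
  unfold pt at 1.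
  rewrite (Derive_ext_loc _ (fun u => ST N phi z u / Phi N phi z u) s).
  2:{ eapply filter_imp; [|exact (locpos s Hs)]. intros u Hu. apply PT1; auto. }
  apply is_derive_unique.
  apply is_derive_div.
  - unfold ST. apply t_deriv. intros; apply Hd; auto.
  - unfold Phi, ST. apply t_deriv. intros; apply Hd; auto.
  - pose proof (Phi_pos N phi z s H Hs). lra.
Qed.

Lemma hess_eq N phi z s a b : Hyp N phi -> 0 < s ->
  hess_form N (logPhi N phi) z s a b =
  (sumR N (fun k => a k * (a k * dy (dy phi) (z k) s + b * dt (dy phi) (z k) s)
                    + b * (a k * dy (dt phi) (z k) s + b * dt (dt phi) (z k) s))
     * Phi N phi z s
   - (sumR N (fun k => a k * dy phi (z k) s + b * dt phi (z k) s)) ^ 2)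
  / (Phi N phi z s) ^ 2.
Proof.
  intros H Hs. unfold hess_form.
  pose proof (Phi_pos N phi z s H Hs) as HP.
  set (P := Phi N phi z s) in *.
  set (SY := sumR N (fun k => a k * dy phi (z k) s)).
  assert (E1 : forall i, (i < N)%nat ->
     sumR N (fun j => a i * pxi (pxi (logPhi N phi) j) i z s * a j)
     = a i * (a i * dy (dy phi) (z i) s) / P - a i * dy phi (z i) s * SY / P ^ 2).
  { intros i Hi.
    rewrite (sumR_ext _ _ (fun j => (if Nat.eqb j i then a i * (a i * dy (dy phi) (z i) s) / P else 0)
               + (- (a i * dy phi (z i) s / P ^ 2)) * (a j * dy phi (z j) s))).
    - rewrite sumR_add, sumR_delta, sumR_scal by auto. unfold SY. field. lra.
    - intros j Hj. rewrite PXX by auto. fold P.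
      destruct (Nat.eqb j i) eqn:E; [apply Nat.eqb_eq in E; subst|]; field; lra. }
  rewrite (sumR_ext _ _ _ E1).
  rewrite (sumR_ext _ (fun i => a i * (a i * dy (dy phi) (z i) s) / P - a i * dy phi (z i) s * SY / P ^ 2) (fun i => / P * (a i * (a i * dy (dy phi) (z i) s))
      + (- (SY / P ^ 2)) * (a i * dy phi (z i) s)))
    by (intros; field; lra).
  rewrite sumR_add, !sumR_scal. fold SY.
  rewrite (sumR_ext _ (fun i => a i * pxi (pt (logPhi N phi)) i z s * b) (fun i => (b / P) * (a i * dy (dt phi) (z i) s)
      + (- (b * ST N phi z s / P ^ 2)) * (a i * dy phi (z i) s)))
    by (intros; rewrite PXT by auto; fold P; field; lra).
  rewrite sumR_add, !sumR_scal. fold SY.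
  rewrite (sumR_ext _ (fun j => b * pt (pxi (logPhi N phi) j) z s * a j) (fun j => (b / P) * (a j * dt (dy phi) (z j) s)
      + (- (b * ST N phi z s / P ^ 2)) * (a j * dy phi (z j) s)))
    by (intros; rewrite PTX by auto; fold P; field; lra).
  rewrite sumR_add, !sumR_scal. fold SY.
  rewrite PTT by auto. fold P.
  rewrite (sumR_ext _ (fun k => a k * (a k * dy (dy phi) (z k) s + b * dt (dy phi) (z k) s)
                    + b * (a k * dy (dt phi) (z k) s + b * dt (dt phi) (z k) s)) (fun k => (a k * (a k * dy (dy phi) (z k) s)) + b * (a k * dt (dy phi) (z k) s)
       + (b * (a k * dy (dt phi) (z k) s) + (b * b) * dt (dt phi) (z k) s)))
    by (intros; ring).
  rewrite !sumR_add, !sumR_scal.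
  fold SY. unfold ST. field. lra.
Qed.

Lemma ortho N (Y p l : nat -> R) : sumR N p = 1 ->
  ((exists i, (i < N)%nat /\ Y i <> 0) -> exists c, forall i, (i < N)%nat -> p i = c * Y i) ->
  sumR N (fun k => (sumR N (fun j => p j * l j) - l k) * Y k) = 0.
Proof.
  intros Hs Hc. set (L := sumR N (fun j => p j * l j)).
  destruct (classic (exists i, (i < N)%nat /\ Y i <> 0)) as [Ex|Nx].
  - destruct (Hc Ex) as [c Hcc].
    assert (E1 : c * sumR N Y = 1).
    { rewrite <- sumR_scal, <- Hs. apply sumR_ext. intros; rewrite Hcc; auto. }
    assert (E2 : L = c * sumR N (fun k => l k * Y k)).
    { unfold L. rewrite <- sumR_scal. apply sumR_ext. intros; rewrite Hcc; auto; ring. }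
    rewrite (sumR_ext _ _ (fun k => L * Y k + (-1) * (l k * Y k))) by (intros; ring).
    rewrite sumR_add, !sumR_scal. rewrite E2.
    transitivity ((c * sumR N Y) * sumR N (fun k => l k * Y k) - sumR N (fun k => l k * Y k)); [ring|].
    rewrite E1. ring.
  - rewrite (sumR_ext _ _ (fun k => 0 * 0)).
    + rewrite sumR_scal; ring.
    + intros k Hk. assert (Y k = 0).
      { apply NNPP. intro. apply Nx. exists k. auto. }
      rewrite H; ring.
Qed.

Lemma test (f g : R -> R) u a b df dg : is_derive f u df -> is_derive g u dg ->
  is_derive (fun u => a * f u + b * g u) u (a * df + b * dg).
Proof.
  intros. apply (is_derive_plus (fun u => a * f u) (fun u => b * g u)); apply is_derive_scal; auto.
Qed.


Lemma EE : forall a b c : R, (a*c - b^2)/c^2 = (a*c - b*b)/c^2.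
Proof. intros; replace (b^2) with (b*b) by ring; reflexivity. Qed.

Lemma alg1 a b c P : 0 < P ->
  1 / 1 * a + (1 - 0) * 1 / 1 * (- b / 2 / P) + (1 - 0) * ((1 - 0) * 1) / (1 + 1) * c - a
  = - b / (2 * P) + / 2 * c.
Proof. intros. field. lra. Qed.

Lemma alg2 a Y Dt P H : 0 < P -> Y <> 0 -> a - a = - (Y * Dt) / (2 * P) + / 2 * H ->
  Dt = P * H / Y.
Proof.
  intros HP HY E.
  assert (E2 : Y * Dt = P * H).
  { apply (Rmult_eq_reg_r (/ (2 * P))); [|apply Rinv_neq_0_compat; lra].
    replace (Y * Dt * / (2 * P)) with (- (- (Y * Dt) / (2 * P))) by (field; lra).
    replace (P * H * / (2 * P)) with (/ 2 * H) by (field; lra). lra. }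
  rewrite <- E2. field. auto.
Qed.

Theorem lemma6p3 (D : option R) (phi : R -> R -> R) (N : nat)
  (x : nat -> R) (t : R) (p l : nat -> R) (Dt : R) :
  good_potential D phi ->
  (forall y s, 0 <= s -> 0 < phi y s) ->
  (1 <= N)%nat ->
  (forall i, (i < N)%nat -> inD D (x i)) ->
  0 < t ->
  (forall i, (i < N)%nat -> 0 <= p i) ->
  sumR N p = 1 ->
  ((exists i, (i < N)%nat /\ dy phi (x i) t <> 0) ->
     exists c, forall i, (i < N)%nat -> p i = c * dy phi (x i) t) ->
  0 <= Dt ->
  let Dx := fun i => sumR N (fun j => p j * l j) - l i in
  let x' := fun i => x i + Dx i in
  let t' := t + Dt in
  exists s, 0 <= s <= 1 /\
    let xb := fun i => x i + s * Dx i in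
    let tb := t + s * Dt in
    logPhi N phi x' t' - logPhi N phi x t
      = - (sumR N (fun i => dy (dy phi) (x i) t) * Dt) / (2 * Phi N phi x t)
        + / 2 * hess_form N (logPhi N phi) xb tb Dx Dt
    /\ (logPhi N phi x' t' = logPhi N phi x t ->
        sumR N (fun i => dy (dy phi) (x i) t) <> 0 ->
        Dt = Phi N phi x t * hess_form N (logPhi N phi) xb tb Dx Dt
             / sumR N (fun i => dy (dy phi) (x i) t)).
Proof.
  intros HG Hpos HN HD Ht Hp0 Hp1 Hprop HDt Dx x' t'.
  destruct HG as [_ [H3d [_ [_ [_ [_ Hheat]]]]]].
  assert (HH : Hyp N phi).
  { split; [auto| split; [auto|]]. intros y s Hs.
    destruct (H3d y s Hs) as [A [B [C _]]]; auto. }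
  pose proof HH as [_ [_ Hd]].
  set (SS := fun u => sumR N (fun k => phi (x k + u * Dx k) (t + u * Dt))).
  set (g := fun u => ln (SS u)).
  set (D1 := fun u => sumR N (fun k => Dx k * dy phi (x k + u * Dx k) (t + u * Dt)
                                     + Dt * dt phi (x k + u * Dx k) (t + u * Dt))).
  set (D1p := fun u => sumR N (fun k =>
      Dx k * (Dx k * dy (dy phi) (x k + u * Dx k) (t + u * Dt) + Dt * dt (dy phi) (x k + u * Dx k) (t + u * Dt))
    + Dt * (Dx k * dy (dt phi) (x k + u * Dx k) (t + u * Dt) + Dt * dt (dt phi) (x k + u * Dx k) (t + u * Dt)))).
  set (g1 := fun u => D1 u / SS u).
  set (g2 := fun u => (D1p u * SS u - D1 u * D1 u) / SS u ^ 2).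
  assert (Spos : forall u, 0 < t + u * Dt -> 0 < SS u).
  { intros u Hu. apply (Phi_pos N phi (fun k => x k + u * Dx k) (t + u * Dt) HH Hu). }
  assert (dS : forall u, 0 < t + u * Dt -> is_derive SS u (D1 u)).
  { intros u Hu. unfold SS, D1.
    apply (sumR_deriv N (fun k u => phi (x k + u * Dx k) (t + u * Dt))).
    intros k Hk. apply line_deriv. apply Hd; auto. }
  assert (dD1 : forall u, 0 < t + u * Dt -> is_derive D1 u (D1p u)).
  { intros u Hu. unfold D1, D1p.
    apply (sumR_deriv N (fun k u => Dx k * dy phi (x k + u * Dx k) (t + u * Dt)
                                     + Dt * dt phi (x k + u * Dx k) (t + u * Dt))).
    intros k Hk. apply test; apply line_deriv; apply Hd; auto. }
  assert (dg : forall u, 0 < t + u * Dt -> is_derive g u (g1 u)).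
  { intros u Hu. unfold g, g1. apply ln_comp; auto. }
  assert (dg1 : forall u, 0 < t + u * Dt -> is_derive g1 u (g2 u)).
  { intros u Hu. exact (is_derive_div D1 SS u _ _ (dD1 u Hu) (dS u Hu) (Rgt_not_eq _ _ (Spos u Hu))). }
  set (V := fun u => - t / (Dt + 1) < u).
  assert (VU : forall u, V u -> 0 < t + u * Dt).
  { intros u Hu. unfold V in Hu.
    assert (u * (Dt + 1) > - t).
    { apply (Rmult_lt_compat_r (Dt + 1)) in Hu; [|lra].
      replace (- t / (Dt + 1) * (Dt + 1)) with (- t) in Hu by (field; lra). lra. }
    destruct (Rle_lt_dec 0 u); nra. }
  assert (V01 : forall u, 0 <= u -> V u).
  { intros u Hu. unfold V. assert (0 < t / (Dt + 1)) by (apply Rdiv_lt_0_compat; lra).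
    unfold Rdiv in *. lra. }
  assert (DD : forall u, V u -> Derive_n g 2 u = g2 u).
  { intros u Hu. simpl.
    rewrite (Derive_ext_loc _ g1 u).
    - apply is_derive_unique, dg1, VU; auto.
    - eapply filter_imp; [|apply (open_gt (- t / (Dt + 1))); exact Hu].
      intros v Hv. apply is_derive_unique, dg, VU. exact Hv. }
  destruct (Taylor_Lagrange g 1 0 1 Rlt_0_1) as [z [Hz Eq]].
  { intros u Hu k Hk. assert (Vu : V u) by (apply V01; lra).
    destruct k as [|[|[|k]]]; simpl.
    - exact I.
    - exists (g1 u). apply dg, VU; auto.
    - exists (g2 u). apply (is_derive_ext_loc g1).
      + eapply filter_imp; [|apply (open_gt (- t / (Dt + 1))); exact Vu].
        intros v Hv. symmetry. apply is_derive_unique, dg, VU. exact Hv.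
      + apply dg1, VU; auto.
    - lia. }
  exists z. split; [lra|]. intros xb tb.
  assert (Htb : 0 < tb) by (unfold tb; nra).
  assert (Hhess : hess_form N (logPhi N phi) xb tb Dx Dt = g2 z).
  { rewrite hess_eq by auto.
    change (sumR N (fun k => Dx k * dy phi (xb k) tb + Dt * dt phi (xb k) tb)) with (D1 z).
    change (Phi N phi xb tb) with (SS z).
    change (sumR N (fun k =>
     Dx k * (Dx k * dy (dy phi) (xb k) tb + Dt * dt (dy phi) (xb k) tb) +
     Dt * (Dx k * dy (dt phi) (xb k) tb + Dt * dt (dt phi) (xb k) tb))) with (D1p z).
    unfold g2. apply EE. }
  assert (S0 : SS 0 = Phi N phi x t).
  { unfold SS, Phi. apply sumR_ext. intros k Hk. f_equal; ring. }
  assert (G0 : g 0 = logPhi N phi x t) by (unfold g, logPhi; rewrite S0; auto).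
  assert (G1 : g 1 = logPhi N phi x' t').
  { unfold g, logPhi, SS, Phi. f_equal. apply sumR_ext. intros k Hk. unfold x', t'. f_equal; ring. }
  assert (D10 : D1 0 = - (sumR N (fun i => dy (dy phi) (x i) t) * Dt) / 2).
  { unfold D1.
    rewrite (sumR_ext _ _ (fun k => 1 * ((sumR N (fun j => p j * l j) - l k) * dy phi (x k) t)
                 + (- Dt / 2) * dy (dy phi) (x k) t)).
    - rewrite sumR_add, !sumR_scal, ortho by auto. field.
    - intros k Hk. replace (x k + 0 * Dx k) with (x k) by ring.
      replace (t + 0 * Dt) with t by ring. rewrite Hheat by auto. unfold Dx. field. }
  assert (Pp : 0 < Phi N phi x t) by (apply Phi_pos; auto).
  assert (Main : logPhi N phi x' t' - logPhi N phi x t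
      = - (sumR N (fun i => dy (dy phi) (x i) t) * Dt) / (2 * Phi N phi x t)
        + / 2 * hess_form N (logPhi N phi) xb tb Dx Dt).
  { rewrite <- G0, <- G1, Hhess, Eq.
    rewrite DD by (apply V01; lra). simpl.
    replace (Derive (fun x => g x) 0) with (g1 0)
      by (symmetry; apply is_derive_unique, dg, VU, V01; lra).
    unfold g1. rewrite D10, S0. apply alg1. lra. }
  split; [exact Main|].
  intros Heq Hne. rewrite Heq in Main.
  eapply alg2; eauto.
Qed.
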